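(* Let $n_u<n$ be positive integers, $n_b=n-n_u$, $\mathbf{A}\in\mathbb{R}^{n_u\times n_b}$, and $\mathbf{C}=[\mathbf{I}_{n_u}\;\; -\mathbf{A}]\in\mathbb{R}^{n_u\times n}$. Let $p\ge 2$ experts be given; for $j=1,\dots,p$ let $1\le n_j\le n$ and let $\mathbf{L}_j\in\{0,1\}^{n_j\times n}$ be a selection matrix (its rows are distinct rows of $\mathbf{I}_n$), and assume every $i\in\{1,\dots,n\}$ is selected by at least one $\mathbf{L}_j$. Let $m=\sum_{j=1}^p n_j$, $\mathbf{K}=[\mathbf{L}_1^\top\;\cdots\;\mathbf{L}_p^\top]^\top\in\{0,1\}^{m\times n}$, let $\widehat{\mathbf{y}}=[\widehat{\mathbf{y}}^{1\top}\cdots\widehat{\mathbf{y}}^{p\top}]^\top\in\mathbb{R}^m$ with $\widehat{\mathbf{y}}^j\in\mathbb{R}^{n_j}$, and let $\mathbf{W}\in\mathbb{R}^{m\times m}$ be symmetric positive definite. Then the solution of the linearly constrained quadratic program $$\widetilde{\mathbf{y}}^c=\arg\min_{\mathbf{y}\in\mathbb{R}^n}(\widehat{\mathbf{y}}-\mathbf{K}\mathbf{y})^\top\mathbf{W}^{-1}(\widehat{\mathbf{y}}-\mathbf{K}\mathbf{y})\quad\text{s.t. }\mathbf{C}\mathbf{y}=\mathbf{0}_{(n_u\times 1)}$$ is given by $\widetilde{\mathbf{y}}^c=\boldsymbol{\Psi}^\top\widehat{\mathbf{y}}=\mathbf{M}\boldsymbol{\Omega}^\top\widehat{\mathbf{y}}$,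 where $\mathbf{W}_c=(\mathbf{K}^\top\mathbf{W}^{-1}\mathbf{K})^{-1}$, $\boldsymbol{\Omega}=\mathbf{W}^{-1}\mathbf{K}\mathbf{W}_c$, $\mathbf{M}=\mathbf{I}_n-\mathbf{W}_c\mathbf{C}^\top(\mathbf{C}\mathbf{W}_c\mathbf{C}^\top)^{-1}\mathbf{C}$, and $\boldsymbol{\Psi}^\top=\mathbf{M}\boldsymbol{\Omega}^\top\in\mathbb{R}^{n\times m}$.
   Context: Setting: a linearly constrained multiple time series whose target forecast vector $\mathbf{y}\in\mathbb{R}^n$ must satisfy $\mathbf{C}\mathbf{y}=\mathbf{0}$ (coherence). Expert $j$ provides base forecasts $\widehat{\mathbf{y}}^j$ of the subvector $\mathbf{L}_j\mathbf{y}$; these are stacked ''by expert'' into $\widehat{\mathbf{y}}$, and $\mathbf{W}$ plays the role of the covariance matrix of the base forecast errors $\widehat{\mathbf{y}}-\mathbf{K}\mathbf{y}$. $\widetilde{\mathbf{y}}^c$ is called the optimal (minimum mean square error) linear coherent combined forecast. *)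

(* Defs.v *)
From HB Require Import structures.
From mathcomp Require Import all_boot all_order all_algebra.
Set Implicit Arguments. Unset Strict Implicit. Unset Printing Implicit Defensive.
Import Order.TTheory GRing.Theory Num.Theory.
Local Open Scope ring_scope.

Definition is_selection (R : ringType) (k n : nat) (L : 'M[R]_(k, n)) : Prop :=
  exists s : 'I_k -> 'I_n, injective s /\
    L = \matrix_(r < k, c < n) (c == s r)%:R.

Definition spd (R : numDomainType) (m : nat) (W : 'M[R]_m) : Prop :=
  W^T = W /\ forall x : 'cV[R]_m, x != 0 -> 0 < (x^T *m W *m x) ord0 ord0.

Definition qloss (R : fieldType) (m n : nat) (W : 'M[R]_m) (K : 'M[R]_(m, n))
  (yhat : 'cV[R]_m) (y : 'cV[R]_n) : R :=
  ((yhat - K *m y)^T *m invmx W *m (yhat - K *m y)) ord0 ord0.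

(* Main.v *)
Require Import Defs.
From HB Require Import structures.
From mathcomp Require Import all_boot all_order all_algebra.
Import Order.TTheory GRing.Theory Num.Theory.
Local Open Scope ring_scope.

Section H.
Variable R : realFieldType.

Definition pd (m : nat) (X : 'M[R]_m) :=
  forall x : 'cV[R]_m, x != 0 -> 0 < (x^T *m X *m x) ord0 ord0.
Arguments pd {m}.

Lemma pd_unit m (X : 'M[R]_m) : X^T = X -> pd X -> X \in unitmx.
Proof.
move=> sM pM; rewrite unitmxE unitfE; apply/negP => /det0P [v nv vM].
have : v^T != 0 by rewrite trmx_eq0.
move/pM; rewrite trmxK vM mul0mx mxE ltxx //.
Qed.

Lemma pd_inv m (X : 'M[R]_m) : X^T = X -> pd X -> pd (invmx X).
Proof.
move=> sM pM x nx; have uM := @pd_unit _ _ sM pM.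
set z := invmx X *m x.
have xz : x = X *m z by rewrite /z mulmxA mulmxV // mul1mx.
have nz : z != 0 by apply: contraNneq nx => z0; rewrite xz z0 mulmx0.
rewrite xz trmx_mul sM -!mulmxA [invmx X *m _]mulmxA mulVmx // mul1mx mulmxA.
exact: pM.
Qed.

Lemma pd_congr m n (Q : 'M[R]_m) (K : 'M[R]_(m, n)) : pd Q ->
  (forall x : 'cV[R]_n, K *m x = 0 -> x = 0) -> pd (K^T *m Q *m K).
Proof.
move=> pQ iK x nx.
have nKx : K *m x != 0 by apply: contraNneq nx => /iK ->.
have := pQ _ nKx; by rewrite trmx_mul !mulmxA.
Qed.
End H.

Theorem theorem1 (R : realFieldType) (nu nb : nat) (A : 'M[R]_(nu, nb))
  (p : nat) (nj : 'I_p -> nat) (L : forall j : 'I_p, 'M[R]_(nj j, nu + nb))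
  (W : 'M[R]_(\sum_(j < p) nj j)) (yhat : 'cV[R]_(\sum_(j < p) nj j)) :
  (0 < nu)%N -> (0 < nb)%N -> (2 <= p)%N ->
  (forall j, 1 <= nj j <= nu + nb)%N ->
  (forall j, is_selection (L j)) ->
  (forall i : 'I_(nu + nb), exists j : 'I_p, exists r : 'I_(nj j), L j r i = 1) ->
  spd W ->
  let C : 'M[R]_(nu, nu + nb) := row_mx 1%:M (- A) in
  let K : 'M[R]_(\sum_(j < p) nj j, nu + nb) := \mxcol_(j < p) L j in
  let Wc := invmx (K^T *m invmx W *m K) in
  let Omega := invmx W *m K *m Wc in
  let M := 1%:M - Wc *m C^T *m invmx (C *m Wc *m C^T) *m C in
  let PsiT := M *m Omega^T in
  let yc := PsiT *m yhat in
  (* yc is the (unique) solution of the constrained problem *)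
  C *m yc = 0 /\
  (forall y : 'cV[R]_(nu + nb), C *m y = 0 -> y != yc ->
     qloss W K yhat yc < qloss W K yhat y).
Proof.
move=> _ _ _ _ Lsel Lcov [sW pW] C K Wc Omega M PsiT yc.
have pW' : @pd R _ W by [].
set Q := invmx W.
have sQ : Q^T = Q by rewrite /Q trmx_inv sW.
have pQ : @pd R _ Q by exact: (@pd_inv R).
have iK : forall x : 'cV[R]_(nu + nb), K *m x = 0 -> x = 0.
  move=> x Kx0; apply/matrixP => i k; rewrite (ord1 k) mxE.
  have [j [r Ljri]] := Lcov i.
  have := Lsel j => -[s [_ Ls]].
  have Ljx : L j *m x = 0.
    by rewrite -(mxcolK (fun j => L j *m x)) -mxcol_mul -/K Kx0 submxcol0.
  have sri : s r = i.
    move: Ljri; rewrite Ls mxE; case: eqP => // _ /esym/eqP; by rewrite oner_eq0.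
  have E := congr1 (fun X : 'M[R]_(nj j, 1) => X r ord0) Ljx.
  rewrite /= !mxE in E; rewrite -E.
  rewrite (bigD1 i) //= big1 ?addr0.
    by rewrite Ls mxE sri eqxx mul1r.
  move=> c ci; rewrite Ls mxE.
  have -> : (c == s r) = false by apply/negbTE; rewrite sri.
  by rewrite mul0r.
set G := K^T *m Q *m K.
have sG : G^T = G by rewrite /G !trmx_mul trmxK sQ mulmxA.
have pG : @pd R _ G by exact: (@pd_congr R).
have uG := @pd_unit R _ _ sG pG.
have sWc : Wc^T = Wc by rewrite /Wc trmx_inv -/Q -/G sG.
have pWc : @pd R _ Wc by exact: (@pd_inv R).
have iCt : forall z : 'cV[R]_nu, C^T *m z = 0 -> z = 0.
  move=> z; rewrite /C tr_row_mx mul_col_mx => /eqP; rewrite col_mx_eq0.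
  by case/andP => /eqP; rewrite trmx1 mul1mx.
set S := C *m Wc *m C^T.
have sS : S^T = S by rewrite /S !trmx_mul trmxK sWc mulmxA.
have pS : @pd R _ S.
  have := @pd_congr R _ _ Wc C^T pWc iCt; by rewrite trmxK.
have uS := @pd_unit R _ _ sS pS.
set b := K^T *m Q *m yhat.
set lam := invmx S *m (C *m Wc *m b).
have hyc : yc = Wc *m b - Wc *m C^T *m lam.
  rewrite /yc /PsiT /M /Omega !trmx_mul sWc sQ /lam /b /S.
  by rewrite mulmxBl mul1mx !mulmxA mulmxBl.
have Cyc : C *m yc = 0.
  by rewrite hyc mulmxBr !mulmxA -/S mulmxV // mul1mx subrr.
split => // y Cy nyc.
have key : K^T *m Q *m (yhat - K *m yc) = C^T *m lam.
  rewrite mulmxBr -/b mulmxA -/G hyc mulmxBr !mulmxA /Wc mulmxV // !mul1mx.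
  by rewrite opprB addrC subrK.
set d := y - yc.
have Cd : C *m d = 0 by rewrite mulmxBr Cy Cyc subrr.
have nd : d != 0 by rewrite subr_eq0.
set r := yhat - K *m yc.
have ey : yhat - K *m y = r - K *m d.
  by rewrite /r /d mulmxBr opprB addrA subrK.
have c1 : r^T *m Q *m (K *m d) = 0.
  have -> : r^T *m Q *m (K *m d) = (K^T *m Q *m r)^T *m d.
    by rewrite !trmx_mul trmxK sQ !mulmxA.
  by rewrite key trmx_mul trmxK -mulmxA Cd mulmx0.
have c2 : (K *m d)^T *m Q *m r = 0.
  have -> : (K *m d)^T *m Q *m r = d^T *m (K^T *m Q *m r).
    by rewrite trmx_mul !mulmxA.
  by rewrite key mulmxA -trmx_mul Cd trmx0 mul0mx.
have E : (r - K *m d)^T *m Q *m (r - K *m d) = r^T *m Q *m r + d^T *m G *m d.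
  rewrite linearB /= [(r - _)^T]linearB /= !mulmxBl c1 c2 subr0 sub0r opprK.
  by rewrite /G trmx_mul !mulmxA.
rewrite /qloss ey -/Q E -/r [X in _ < X]mxE ltrDl; exact: pG.
Qed.
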